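(* Let $p,a$ be positive integers with $\gcd(a,p)=1$, let $r\ge0$, $m\ge1$ and $1\le v\le p$ be integers. Let $b_{v,r,a,m}(n)$ denote the number of partitions of $n$ in which every multiplicity is congruent to $ja\pmod p$ for some $j\in\{0,1,\ldots,v-1\}$ and, for such $j$, lies between $j(pr+a)$ and $j(pr+a)+p(m-1)$ inclusive (equivalently, every multiplicity has the form $j(pr+a)+pk$ with $0\le j\le v-1$, $0\le k\le m-1$). Set $b_{v,r,a,m}(0)=1$ and $b_{v,r,a,m}(n)=0$ for $n<0$. If $\gcd(v,p)\nmid n$, then $$b_{v,r,a,m}(n)=\sum_{j=1}^{n}(-1)^{j+1}\Big(b_{v,r,a,m}\big(n-\tfrac{(pr+a)j(3j-1)}{2}\big)+b_{v,r,a,m}\big(n-\tfrac{(pr+a)j(3j+1)}{2}\big)\Big).$$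
   Context: Multiplicity of a part means the number of times it appears in the partition. *)

(* Defs.v *)
From mathcomp Require Import all_boot all_order all_algebra.
Set Implicit Arguments. Unset Strict Implicit. Unset Printing Implicit Defensive.
Import Order.TTheory GRing.Theory Num.Theory.

(* A partition of n is encoded by its multiplicity function:
   mu : {ffun 'I_n -> 'I_n.+1}, where mu i is the multiplicity of the part i+1
   (every part of a partition of n lies in 1..n and has multiplicity <= n). *)
Definition is_partition_mult (n : nat) (mu : {ffun 'I_n -> 'I_n.+1}) : bool :=
  \sum_(i < n) (i.+1 * mu i)%N == n.

Definition allowed_mult (p a r m v : nat) (c : nat) : bool :=
  [exists j : 'I_v, exists k : 'I_m, c == (j * (p * r + a) + p * k)%N].

(* b_{v,r,a,m}(n) for n >= 0.  A multiplicity 0 (part absent) is always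
   allowed (j = k = 0), so the condition on all mu i is the condition on
   multiplicities of parts that occur. *)
Definition b_nat (p a r m v n : nat) : nat :=
  #|[set mu : {ffun 'I_n -> 'I_n.+1} |
      is_partition_mult mu && [forall i, allowed_mult p a r m v (mu i)]]|.

Definition b (p a r m v : nat) (z : int) : int :=
  match z with
  | Posz k => (b_nat p a r m v k)%:Z
  | Negz _ => 0
  end.

(* Main.v *)
Require Import Defs.
From mathcomp Require Import all_boot all_order all_algebra.
From mathcomp Require Import zify ring.
Import Order.TTheory GRing.Theory Num.Theory.
Local Open Scope ring_scope.
Set Implicit Arguments. Unset Strict Implicit. Unset Printing Implicit Defensive.
Fixpoint tri (n : nat) : nat := if n is n'.+1 then (tri n' + n)%N else 0%N.
Lemma triS n : tri n.+1 = (tri n + n.+1)%N. Proof. by []. Qed.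
Lemma tri2 n : (2 * tri n = n * n.+1)%N.
Proof. elim: n => [|n IH] //=. lia. Qed.
Lemma tri_ge n : (n <= tri n)%N.
Proof. elim: n => [|n IH] //=. lia. Qed.

Section Shanks.
Variable R : comNzRingType.
Variable y : R.

Definition Pq (n s : nat) : R := \prod_(s <= i < n) (1 - y ^+ i.+1).
Definition Tm (n s : nat) : R := (-1) ^+ s * y ^+ (s * n + tri s) * Pq n s.
Definition Lsh (n : nat) : R := \sum_(0 <= s < n.+1) Tm n s.
Definition Pent (n : nat) : R :=
  1 + \sum_(1 <= j < n.+1) (-1) ^+ j * (y ^+ (j * j + tri j) + y ^+ (j * j + tri j - j)).

Definition Vt (n s : nat) : R := (-1) ^+ s.+1 * y ^+ (s.+1 * n.+1 + tri s) * Pq n s.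

Lemma step_term (n s : nat) : (s < n.+1)%N ->
  Tm n.+1 s - Tm n s = Vt n s - (if s is s'.+1 then Vt n s' else 0).
Proof.
move=> hs.
have PN : Pq n.+1 s = Pq n s * (1 - y ^+ n.+1) by rewrite /Pq big_nat_recr.
rewrite /Tm /Vt.
move: PN; case: s hs => [|s] hs PN; rewrite PN.
  rewrite !mul0n !add0n /= subr0 !expr0 !mul1r expr1 mul1n addn0.
  ring.
have PS : Pq n s = (1 - y ^+ s.+1) * Pq n s.+1 by rewrite /Pq big_ltn.
rewrite PS (triS s).
set P := Pq n s.+1.
have e1 : (s.+1 * n.+1 + (tri s + s.+1) = s*n + n + tri s + s.+1 + s.+1)%N by lia.
have e2 : (s.+1 * n + (tri s + s.+1) = s*n + n + tri s + s.+1)%N by lia.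
have e3 : (s.+2 * n.+1 + (tri s + s.+1) = s*n + n + tri s + s.+1 + s.+1 + n.+1)%N by lia.
have e4 : (s.+1 * n.+1 + tri s = s*n + n + tri s + s.+1)%N by lia.
rewrite e1 e2 e3 e4 !exprD !exprS; ring.
Qed.

Lemma telescope (n K : nat) : (K < n.+1)%N ->
  \sum_(0 <= s < K.+1) (Tm n.+1 s - Tm n s) = Vt n K.
Proof.
elim: K => [|K IH] hK.
  by rewrite big_nat1 step_term // subr0.
rewrite big_nat_recr //= IH ?(ltnW hK) // step_term //; ring.
Qed.

Lemma Pq_nn n : Pq n n = 1. Proof. by rewrite /Pq big_geq. Qed.

Lemma shanks n : Lsh n = Pent n.
Proof.
elim: n => [|n IH].
  by rewrite /Lsh /Pent big_nat1 big_geq // /Tm /Pq big_geq // expr0 !mul1r addr0.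
have -> : Lsh n.+1 = Lsh n + \sum_(0 <= s < n.+1) (Tm n.+1 s - Tm n s) + Tm n.+1 n.+1.
  by rewrite /Lsh (big_nat_recr n.+1) //= sumrB; ring.
rewrite IH telescope // /Pent [in RHS](big_nat_recr n.+1) //= /Vt /Tm !Pq_nn !mulr1.
have e1 : (n.+1 * n.+1 + tri n = n.+1 * n.+1 + tri n.+1 - n.+1)%N by rewrite triS; lia.
rewrite e1; ring.
Qed.
End Shanks.
Lemma allowed_uniq (p a r v : nat) j1 j2 k1 k2 :
  (0 < p)%N -> coprime a p -> (v <= p)%N -> (j1 < v)%N -> (j2 < v)%N ->
  (j1 * (p * r + a) + p * k1 = j2 * (p * r + a) + p * k2)%N -> j1 = j2 /\ k1 = k2.
Proof.
move=> hp hco hvp h1 h2.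
have hc : coprime p (p * r + a).
  by rewrite coprime_sym -coprime_modl (mulnC p r) modnMDl coprime_modl.
wlog le12 : j1 j2 k1 k2 h1 h2 / (j1 <= j2)%N.
  move=> W E; case: (leqP j1 j2) => hle; first exact: W.
  by have [-> ->] := W j2 j1 k2 k1 h2 h1 (ltnW hle) (esym E).
move=> E.
have E2 : ((j2 - j1) * (p * r + a) = p * (k1 - k2))%N.
  have : (j1 * (p * r + a) <= j2 * (p * r + a))%N by rewrite leq_mul2r le12 orbT.
  rewrite mulnBl mulnBr; move: E; set A := (j1 * _)%N; set B := (j2 * _)%N; set C := (p * k1)%N; set D := (p * k2)%N; clearbody A B C D; clear; lia.
have hd : (p %| (j2 - j1))%N.
  by rewrite -(Gauss_dvdl _ hc) E2 dvdn_mulr.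
have hj : j1 = j2.
  case: (posnP (j2 - j1)) => [z|pos]; first lia.
  have := dvdn_leq pos hd; lia.
subst j2; split => //.
move: E => /eqP; rewrite eqn_add2l eqn_pmul2l //; by move/eqP.
Qed.

Lemma Fsum (R : nmodType) (p a r m v : nat) (f : nat -> R) M :
  (0 < p)%N -> (0 < a)%N -> coprime a p -> (v <= p)%N ->
  (v * (p * r + a) + p * m <= M)%N ->
  \sum_(j < v) \sum_(k < m) f (j * (p * r + a) + p * k)%N =
  \sum_(s < M | allowed_mult p a r m v s) f s.
Proof.
move=> hp ha hco hvp hM.
have HM : forall (x : 'I_v * 'I_m), (x.1 * (p * r + a) + p * x.2 < M)%N.
  move=> [j k] /=.
  have := ltn_ord j; have := ltn_ord k => hk hj.
  have : (j * (p * r + a) + p * k < v * (p * r + a) + p * m)%N; last lia.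
  rewrite -addSn; apply: leq_add; first by rewrite ltn_mul2r hj andbT; lia.
  by rewrite leq_mul2l (ltnW hk) orbT. 
pose h := fun x : 'I_v * 'I_m => Ordinal (HM x).
rewrite pair_bigA /=.
have -> : \sum_(x : 'I_v * 'I_m) f (x.1 * (p * r + a) + p * x.2)%N =
          \sum_(x in [set: 'I_v * 'I_m]) f (h x) by apply: eq_bigl => x; rewrite inE.
rewrite -(@big_imset _ _ _ _ _ h _ (fun s : 'I_M => f s)) /=; last first.
  move=> [j1 k1] [j2 k2] _ _ /(congr1 val) /= E.
  have [e1 e2] := allowed_uniq hp hco hvp (ltn_ord j1) (ltn_ord j2) E.
  by rewrite (ord_inj e1) (ord_inj e2).
apply: eq_bigl => s; apply/imsetP/idP.
  move=> [[j k] _ ->]; apply/existsP; exists j; apply/existsP; exists k => //.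
move=> /existsP [j /existsP [k /eqP E]].
exists (j, k); first by rewrite inE.
apply: val_inj => /=; by rewrite E.
Qed.
Definition eqt (K : nat) (P Q : {poly int}) := forall i, (i <= K)%N -> P`_i = Q`_i.

Lemma eqtM K P P' Q Q' : eqt K P P' -> eqt K Q Q' -> eqt K (P * Q) (P' * Q').
Proof.
move=> hP hQ i hi; rewrite !coefM; apply: eq_bigr => j _.
rewrite hP ?hQ //; [exact: leq_trans (leq_subr _ _) hi|].
by apply: leq_trans hi; rewrite -ltnS.
Qed.

Lemma eqtD K P P' Q Q' : eqt K P P' -> eqt K Q Q' -> eqt K (P + Q) (P' + Q').
Proof. by move=> hP hQ i hi; rewrite !coefD hP ?hQ. Qed.

Lemma eqt_prod K (I : Type) (r : seq I) (Pr : pred I) (F G : I -> {poly int}) :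
  (forall i, Pr i -> eqt K (F i) (G i)) ->
  eqt K (\prod_(i <- r | Pr i) F i) (\prod_(i <- r | Pr i) G i).
Proof. move=> h; apply: (big_ind2 (eqt K)) => //; exact: eqtM. Qed.

Lemma coef_tail (t lo M i : nat) (Pr : pred nat) :
  (i < t * lo)%N ->
  (\sum_(lo <= s < M | Pr s) ('X^(t * s) : {poly int}))`_i = 0.
Proof.
move=> hi; rewrite coef_sum big_nat_cond big1 // => s /andP [/andP [hs _] _].
rewrite coefXn; case: eqP => // E; exfalso.
have : (t * lo <= t * s)%N by rewrite leq_mul2l hs orbT.
lia.
Qed.

Definition Fp (p a r m v t : nat) : {poly int} :=
  \sum_(j < v) \sum_(k < m) 'X^(t * (j * (p * r + a) + p * k)).

Lemma Fp_alt (p a r m v t M : nat) :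
  (0 < p)%N -> (0 < a)%N -> coprime a p -> (v <= p)%N ->
  (v * (p * r + a) + p * m <= M)%N ->
  Fp p a r m v t = \sum_(0 <= s < M | allowed_mult p a r m v s) 'X^(t * s).
Proof.
move=> hp ha hco hvp hM; rewrite big_mkord /Fp.
exact: (Fsum (fun s => 'X^(t * s)) hp ha hco hvp hM).
Qed.

Lemma allowed0 (p a r m v : nat) : (1 <= m)%N -> (1 <= v)%N -> allowed_mult p a r m v 0.
Proof.
move=> hm hv; apply/existsP; exists (Ordinal hv); apply/existsP; exists (Ordinal hm).
by rewrite /= mul0n muln0.
Qed.

Lemma eqt_F (p a r m v t k : nat) :
  (0 < p)%N -> (0 < a)%N -> coprime a p -> (v <= p)%N -> (0 < t)%N ->
  eqt k (Fp p a r m v t) (\sum_(s < k.+1 | allowed_mult p a r m v s) 'X^(t * s)).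
Proof.
move=> hp ha hco hvp ht.
rewrite (@Fp_alt p a r m v t (v * (p * r + a) + p * m + k.+1)) // ?leq_addr //.
rewrite -(big_mkord (fun s => allowed_mult p a r m v s) (fun s => 'X^(t * s))).
rewrite (@big_cat_nat _ _ _ k.+1) ?leq_addl //=.
move=> i hi; rewrite coefD (@coef_tail t k.+1) ?addr0 //.
have : (k.+1 <= t * k.+1)%N by rewrite leq_pmull.
lia.
Qed.

Lemma eqt_F1 (p a r m v t k : nat) :
  (0 < p)%N -> (0 < a)%N -> coprime a p -> (v <= p)%N -> (1 <= m)%N -> (1 <= v)%N ->
  (k < t)%N -> eqt k (Fp p a r m v t) 1.
Proof.
move=> hp ha hco hvp hm hv ht.
rewrite (@Fp_alt p a r m v t (v * (p * r + a) + p * m + 1)) // ?leq_addr //.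
rewrite big_ltn_cond ?addn1 // allowed0 //.
move=> i hi; rewrite coefD coef_tail ?addr0 ?muln0 ?expr0 //.
rewrite muln1; lia.
Qed.

Lemma coef_prodF' (p a r m v k : nat) :
  (\prod_(i < k) \sum_(s : 'I_k.+1 | allowed_mult p a r m v s) ('X^(i.+1 * s) : {poly int}))`_k
  = (b_nat p a r m v k)%:Z.
Proof.
rewrite bigA_distr_big coef_sum.
under eq_bigr => f _ do rewrite prodrXr coefXn.
rewrite /b_nat -sum1_card -natz natr_sum big_mkcond [RHS]big_mkcond /=.
apply: eq_bigr => f _; rewrite inE /is_partition_mult eq_sym.
case: ifP => hf; rewrite inE.
  have -> : [forall i, allowed_mult p a r m v (f i)].
    by apply/forallP => i; move/forallP: hf => /(_ i).
  by rewrite andbT; case: eqP.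
have -> : [forall i, allowed_mult p a r m v (f i)] = false.
  apply/negbTE; apply/negP => /forallP H; move/negP: hf; apply.
  by apply/forallP => i; exact: H.
by rewrite andbF.
Qed.
Definition Gp (p a r m v n : nat) : {poly int} := \prod_(0 <= i < n) Fp p a r m v i.+1.

Lemma coef_G (p a r m v n k : nat) :
  (0 < p)%N -> (0 < a)%N -> coprime a p -> (v <= p)%N -> (1 <= m)%N -> (1 <= v)%N ->
  (k <= n)%N -> (Gp p a r m v n)`_k = (b_nat p a r m v k)%:Z.
Proof.
move=> hp ha hco hvp hm hv hk.
rewrite /Gp (@big_cat_nat _ _ _ k) //=.
have h1 := @eqt_prod k _ (index_iota 0 k) xpredT (fun i => Fp p a r m v i.+1)
   (fun i => \sum_(s < k.+1 | allowed_mult p a r m v s) 'X^(i.+1 * s))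
   (fun i _ => @eqt_F p a r m v i.+1 k hp ha hco hvp (ltn0Sn i)).
have h2 : eqt k (\prod_(k <= i < n) Fp p a r m v i.+1) (\prod_(k <= i < n) 1).
  rewrite big_nat_cond [X in eqt _ _ X]big_nat_cond.
  apply: eqt_prod => i /andP [/andP [hi _] _].
  by apply: eqt_F1.
rewrite (eqtM h1 h2) // big1_eq mulr1 big_mkord.
exact: coef_prodF'.
Qed.

Definition dsupp (d : nat) (P : {poly int}) := forall i, ~~ (d %| i)%N -> P`_i = 0.

Lemma dsuppM d P Q : dsupp d P -> dsupp d Q -> dsupp d (P * Q).
Proof.
move=> hP hQ i hi; rewrite coefM big1 // => j _.
case: (boolP (d %| j)%N) => hj; last by rewrite hP ?mul0r.
rewrite hQ ?mulr0 //; apply: contra hi => hij.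
have hji : (j <= i)%N by rewrite -ltnS.
by rewrite -(subnK hji) dvdn_add.
Qed.

Lemma dsuppD d P Q : dsupp d P -> dsupp d Q -> dsupp d (P + Q).
Proof. by move=> hP hQ i hi; rewrite coefD hP ?hQ ?addr0. Qed.

Lemma dsuppN d P : dsupp d P -> dsupp d (- P).
Proof. by move=> hP i hi; rewrite coefN hP ?oppr0. Qed.

Lemma dsupp1 d : dsupp d 1.
Proof. move=> i hi; rewrite coef1; case: eqP => // E; by rewrite E dvdn0 in hi. Qed.

Lemma dsuppX d e : (d %| e)%N -> dsupp d 'X^e.
Proof. move=> he i hi; rewrite coefXn; case: eqP => // E; by rewrite E he in hi. Qed.

Lemma dsupp_sum d (I : Type) (r : seq I) (Pr : pred I) (F : I -> {poly int}) :
  (forall i, Pr i -> dsupp d (F i)) -> dsupp d (\sum_(i <- r | Pr i) F i).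
Proof.
move=> h; apply: (big_ind (dsupp d)) => //; last exact: dsuppD.
by move=> i _; rewrite coef0.
Qed.

Lemma dsupp_prod d (I : Type) (r : seq I) (Pr : pred I) (F : I -> {poly int}) :
  (forall i, Pr i -> dsupp d (F i)) -> dsupp d (\prod_(i <- r | Pr i) F i).
Proof.
move=> h; apply: (big_ind (dsupp d)); [exact: dsupp1| exact: dsuppM| exact: h].
Qed.

Lemma factorF (p a r m v t : nat) :
  Fp p a r m v t * (1 - ('X^(p * r + a)) ^+ t) =
  (1 - 'X^(t * (p * r + a) * v)) * \sum_(k < m) 'X^(t * (p * k)).
Proof.
set c := (p * r + a)%N.
have -> : Fp p a r m v t = (\sum_(j < v) ('X^(t * c)) ^+ j) * \sum_(k < m) 'X^(t * (p * k)).
  rewrite /Fp mulr_suml; apply: eq_bigr => j _; rewrite mulr_sumr; apply: eq_bigr => k _.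
  rewrite mulnDr exprD -exprM; congr (_ * _); congr (GRing.exp _ _); lia.
rewrite -exprM (mulnC c t).
set Z := 'X^(t * c).
have H := subrX1 Z v.
rewrite (exprM _ (t * c) v) -/Z.
have -> : 1 - Z ^+ v = - (Z ^+ v - 1) by rewrite opprB.
rewrite H; ring.
Qed.

Lemma coef_sign (j i : nat) (Q : {poly int}) : ((-1) ^+ j * Q)`_i = (-1) ^+ j * Q`_i.
Proof. by rewrite -[(-1) ^+ j](rmorph_sign (GRing.RMorphism.clone _ _ polyC _)) coefCM. Qed.

Lemma b_shift (p a r m v n e : nat) :
  (0 < p)%N -> (0 < a)%N -> coprime a p -> (v <= p)%N -> (1 <= m)%N -> (1 <= v)%N ->
  b p a r m v (n%:Z - e%:Z) = (Gp p a r m v n * 'X^e)`_n.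
Proof.
move=> hp ha hco hvp hm hv.
rewrite coefMXn; case: ltnP => he.
  have -> : n%:Z - e%:Z = Negz (e - n).-1.
    rewrite NegzE prednK ?subn_gt0 // -subzn ?(ltnW he) //; by rewrite opprB.
  by [].
by rewrite subzn // /= coef_G // leq_subr.
Qed.

Lemma expo_p (c j : nat) : (c * (j * (3 * j + 1)) %/ 2 = c * (j * j + tri j))%N.
Proof.
have := tri2 j => h.
have -> : (c * (j * (3 * j + 1)) = 2 * (c * (j * j + tri j)))%N.
  rewrite [RHS]mulnCA; congr (c * _)%N; lia.
by rewrite mulKn.
Qed.

Lemma expo_m (c j : nat) : (c * (j * (3 * j - 1)) %/ 2 = c * (j * j + tri j - j))%N.
Proof.
have := tri2 j => h.
have -> : (c * (j * (3 * j - 1)) = 2 * (c * (j * j + tri j - j)))%N.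
  rewrite [RHS]mulnCA; congr (c * _)%N.
  case: j h => [|j] h //.
  have -> : (3 * j.+1 - 1 = 3 * j + 2)%N by lia.
  lia.
by rewrite mulKn.
Qed.

Unset Implicit Arguments.
Theorem theorem4p1 (p a r m v n : nat)
  (hp : (0 < p)%N) (ha : (0 < a)%N) (hco : coprime a p)
  (hm : (1 <= m)%N) (hv1 : (1 <= v)%N) (hvp : (v <= p)%N)
  (hn : ~~ (gcdn v p %| n)%N) :
  b p a r m v n%:Z =
  \sum_(1 <= j < n.+1)
     (-1) ^+ j.+1 *
     (b p a r m v (n%:Z - ((p * r + a) * (j * (3 * j - 1)) %/ 2)%N%:Z)
    + b p a r m v (n%:Z - ((p * r + a) * (j * (3 * j + 1)) %/ 2)%N%:Z)).
Proof.
set c := (p * r + a)%N.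
set G := Gp p a r m v n.
set y : {poly int} := 'X^c.
have hc : (0 < c)%N by rewrite /c addn_gt0 ha orbT.
(* G * E is supported on multiples of d *)
have H0 : (G * Pq y n 0)`_n = 0.
  apply: (_ : dsupp (gcdn v p) (G * Pq y n 0)) => //.
  rewrite /G /Gp /Pq -big_split /=.
  apply: dsupp_prod => i _; rewrite /y factorF.
  apply: dsuppM; last first.
    by apply: dsupp_sum => k _; apply: dsuppX; rewrite dvdn_mull // dvdn_mulr // dvdn_gcdr.
  apply: dsuppD; first exact: dsupp1.
  by apply: dsuppN; apply: dsuppX; rewrite dvdn_mull // dvdn_gcdl.
have HL := shanks y n.
rewrite /Lsh big_ltn // {1}/Tm mul0n add0n /= expr0 !mul1r in HL.
have HE : Pq y n 0 = Pent y n - \sum_(1 <= s < n.+1) Tm y n s.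
  by rewrite -HL addrK.
rewrite HE mulrBr coefB in H0.
have HR : (G * \sum_(1 <= s < n.+1) Tm y n s)`_n = 0.
  rewrite mulr_sumr coef_sum big_nat_cond big1 // => s /andP [/andP [hs _] _].
  have -> : G * Tm y n s = 'X^(c * (s * n + tri s)) * (G * (-1) ^+ s * Pq y n s).
    by rewrite /Tm /y -exprM; ring.
  rewrite coefXnM ifT //.
  have h1 : (s * n + tri s <= c * (s * n + tri s))%N by rewrite leq_pmull.
  have h2 : (n <= s * n)%N by rewrite leq_pmull.
  have h3 := tri_ge s.
  lia.
rewrite HR subr0 /Pent mulrDr mulr1 coefD mulr_sumr coef_sum in H0.
have HG : b p a r m v n%:Z = G`_n by rewrite /= /G coef_G.
rewrite HG.
move/eqP: H0; rewrite addr_eq0 => /eqP ->.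
rewrite -sumrN; apply: eq_bigr => j _.
rewrite expo_p expo_m !b_shift // -/G.
have -> : G * ((-1) ^+ j * (y ^+ (j * j + tri j) + y ^+ (j * j + tri j - j))) =
   (-1) ^+ j * (G * 'X^(c * (j * j + tri j)) + G * 'X^(c * (j * j + tri j - j))).
  by rewrite /y !exprM; ring.
rewrite coef_sign coefD exprS; ring.
Qed.
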